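(* Assume the setting of the context (two temperatures). For every $\gamma\in\mathcal{P}(S^2)$, $I_1(\gamma)=I^\infty(\gamma)$.
   Context: **Dynamics.** $S$ is a finite set. For $k=1,2$, $\Gamma^k$ is an irreducible intensity matrix on $S$, reversible with respect to its unique invariant distribution $\mu_k$. Set $q_k(x)=\sum_{y\ne x}\Gamma^k_{x,y}$ and $\mu=\mu_1\times\mu_2$ on $S^2$. **Weights and infinite swapping rates.** - $\rho(x_1,x_2)=\mu(x_1,x_2)/(\mu(x_1,x_2)+\mu(x_2,x_1))$. - The infinite swapping rates are $\Gamma^\infty_{(x_1,x_2),(y_1,x_2)}=\rho(x_1,x_2)\Gamma^1_{x_1,y_1}+\rho(x_2,x_1)\Gamma^2_{x_1,y_1}$ for $y_1\ne x_1$. - They are $\Gamma^\infty_{(x_1,x_2),(x_1,y_2)}=\rho(x_1,x_2)\Gamma^2_{x_2,y_2}+\rho(x_2,x_1)\Gamma^1_{x_2,y_2}$ for $y_2\ne x_2$. - All other off-diagonal rates are $0$. - $q^\infty(\mathbf{x})=\sum_{\mathbf{y}\ne\mathbf{x}}\Gamma^\infty_{\mathbf{x},\mathbf{y}}$. - $\bar\mu(x_1,x_2)=\frac12[\mu(x_1,x_2)+\mu(x_2,x_1)]$. **Map and rate functions.** - $(M\nu)(x_1,x_2)=\rho(x_1,x_2)[\nu(x_1,x_2)+\nu(x_2,x_1)]$. - For $\nu\in\mathcal{P}(S^2)$ with $\theta=\nu/\bar\mu$, $J(\nu)=\sum_{\mathbf{x}}q^\infty(\mathbf{x})\theta(\mathbf{x})\bar\mu(\mathbf{x})-\sum_{\mathbf{x}\ne\mathbf{y}}\theta^{1/2}(\mathbf{x})\theta^{1/2}(\mathbf{y})\Gamma^\infty_{\mathbf{x},\mathbf{y}}\bar\mu(\mathbf{x})$.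 - $I_1(\gamma)=\inf\{J(\nu):\nu\in\mathcal{P}(S^2),\ M\nu=\gamma\}$, with $\inf\emptyset=+\infty$. **Uncoupled generator.** $\Gamma$ is the rate matrix of the uncoupled process on $S^2$: $\Gamma_{(x_1,x_2),(y_1,x_2)}=\Gamma^1_{x_1,y_1}$ for $y_1\ne x_1$, and $\Gamma_{(x_1,x_2),(x_1,y_2)}=\Gamma^2_{x_2,y_2}$ for $y_2\ne x_2$. All other off-diagonal entries are $0$, and $q(x_1,x_2)=q_1(x_1)+q_2(x_2)$. **Definition of $I^\infty$.** For $\gamma\in\mathcal{P}(S^2)$ with $f=\gamma/\mu$ satisfying $f(x_1,x_2)=f(x_2,x_1)$ for all $(x_1,x_2)$, set \[ I^\infty(\gamma)=\sum_{\mathbf{x}}q(\mathbf{x})\gamma(\mathbf{x})-\sum_{\mathbf{x}\ne\mathbf{y}}f^{1/2}(\mathbf{x})f^{1/2}(\mathbf{y})\Gamma_{\mathbf{x},\mathbf{y}}\mu(\mathbf{x}). \] Otherwise set $I^\infty(\gamma)=+\infty$. *)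

(* Defs.v *)
From HB Require Import structures.
From mathcomp Require Import all_boot all_order all_algebra.
From mathcomp Require Import all_classical all_reals ereal.
Set Implicit Arguments. Unset Strict Implicit. Unset Printing Implicit Defensive.
Import Order.TTheory GRing.Theory Num.Theory.
Local Open Scope ring_scope.
Local Open Scope classical_set_scope.

Section Defs.
Variables (R : realType) (S : finType).

Definition is_prob (T : finType) (p : T -> R) : Prop :=
  (forall x, 0 <= p x) /\ \sum_(x : T) p x = 1.

Definition is_intensity (G : S -> S -> R) : Prop :=
  (forall x y, x != y -> 0 <= G x y) /\ (forall x, \sum_(y : S) G x y = 0).

Definition irreducible (G : S -> S -> R) : Prop :=
  forall x y, connect [rel a b | (a != b) && (0 < G a b)] x y.

Definition is_invariant (G : S -> S -> R) (mu : S -> R) : Prop :=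
  is_prob mu /\ forall y, \sum_(x : S) mu x * G x y = 0.

Definition reversible (G : S -> S -> R) (mu : S -> R) : Prop :=
  forall x y, mu x * G x y = mu y * G y x.

Definition qrate (G : S -> S -> R) (x : S) : R := \sum_(y : S | y != x) G x y.

Variables (G1 G2 : S -> S -> R) (mu1 mu2 : S -> R).

Definition swap (x : S * S) : S * S := (x.2, x.1).

Definition mu (x : S * S) : R := mu1 x.1 * mu2 x.2.

Definition rho (x : S * S) : R := mu x / (mu x + mu (swap x)).

Definition mubar (x : S * S) : R := (mu x + mu (swap x)) / 2.

Definition Ginf (x y : S * S) : R :=
  if (x.2 == y.2) && (x.1 != y.1) then
    rho x * G1 x.1 y.1 + rho (swap x) * G2 x.1 y.1
  else if (x.1 == y.1) && (x.2 != y.2) then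
    rho x * G2 x.2 y.2 + rho (swap x) * G1 x.2 y.2
  else 0.

Definition qinf (x : S * S) : R := \sum_(y : S * S | y != x) Ginf x y.

Definition Gunc (x y : S * S) : R :=
  if (x.2 == y.2) && (x.1 != y.1) then G1 x.1 y.1
  else if (x.1 == y.1) && (x.2 != y.2) then G2 x.2 y.2
  else 0.

Definition qunc (x : S * S) : R := qrate G1 x.1 + qrate G2 x.2.

Definition Mmap (nu : S * S -> R) (x : S * S) : R := rho x * (nu x + nu (swap x)).

Definition Jfun (nu : S * S -> R) : R :=
  let theta := fun x => nu x / mubar x in
  \sum_(x : S * S) qinf x * theta x * mubar x
  - \sum_(x : S * S) \sum_(y : S * S | y != x)
      Num.sqrt (theta x) * Num.sqrt (theta y) * Ginf x y * mubar x.

(* I_1(gamma) = inf { J nu : nu in P(S^2), M nu = gamma }, inf of empty = +oo *)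
Definition I1 (gamma : S * S -> R) : \bar R :=
  ereal_inf [set (Jfun nu)%:E | nu in
               [set nu | is_prob nu /\ forall x, Mmap nu x = gamma x]].

Definition Iinf (gamma : S * S -> R) : \bar R :=
  let f := fun x => gamma x / mu x in
  if [forall x : S * S, f x == f (swap x)] then
    (\sum_(x : S * S) qunc x * gamma x
     - \sum_(x : S * S) \sum_(y : S * S | y != x)
         Num.sqrt (f x) * Num.sqrt (f y) * Gunc x y * mu x)%:E
  else +oo%E.

End Defs.

(* Main.v *)
Require Import Defs.
From HB Require Import structures.
From mathcomp Require Import all_boot all_order all_algebra.
From mathcomp Require Import all_classical all_reals ereal.
From mathcomp Require Import ring lra.
Set Implicit Arguments. Unset Strict Implicit. Unset Printing Implicit Defensive.
Import Order.TTheory GRing.Theory Num.Theory.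
Local Open Scope ring_scope.

Lemma swapK (S : finType) : involutive (@swap S).
Proof. by case. Qed.

Lemma cs_ineq (R : rcfType) (a b a' b' : R) :
  0 <= a -> 0 <= b -> 0 <= a' -> 0 <= b' ->
  2 * ((a + a') / 2 - Num.sqrt ((a + a') / 2) * Num.sqrt ((b + b') / 2))
  <= (a - Num.sqrt a * Num.sqrt b) + (a' - Num.sqrt a' * Num.sqrt b').
Proof.
move=> ha hb ha' hb'.
set u := Num.sqrt ((a + a') / 2); set v := Num.sqrt ((b + b') / 2).
have hu : u ^+ 2 = (a + a') / 2 by rewrite sqr_sqrtr // divr_ge0 ?addr_ge0.
have hv : v ^+ 2 = (b + b') / 2 by rewrite sqr_sqrtr // divr_ge0 ?addr_ge0.
have u0 : 0 <= u by apply: sqrtr_ge0.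
have v0 : 0 <= v by apply: sqrtr_ge0.
have ea := sqr_sqrtr ha; have eb := sqr_sqrtr hb.
have ea' := sqr_sqrtr ha'; have eb' := sqr_sqrtr hb'.
set p := Num.sqrt a in ea *; set q := Num.sqrt b in eb *.
set p' := Num.sqrt a' in ea' *; set q' := Num.sqrt b' in eb' *.
suff : p * q + p' * q' <= 2 * (u * v) by lra.
apply: (le_trans (ler_norm _)).
rewrite -sqrtr_sqr -[2 * (u * v)]ger0_norm ?mulr_ge0 // -sqrtr_sqr.
rewrite ler_sqrt ?sqr_ge0 //.
have -> : (2 * (u * v)) ^+ 2 = 4 * u ^+ 2 * v ^+ 2 by ring.
rewrite hu hv -ea -eb -ea' -eb'.
have := sqr_ge0 (p * q' - p' * q); nra.
Qed.

Section Gen.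
Variables (R : realType) (S : finType).

Definition T (c : S * S -> S * S -> R) (t : S * S -> R) : R :=
  \sum_(x : S * S) \sum_(y : S * S | y != x)
     c x y * (t x - Num.sqrt (t x) * Num.sqrt (t y)).

Lemma sum_swap (F : S * S -> R) : \sum_x F (swap x) = \sum_x F x.
Proof. by rewrite [RHS](reindex_inj (can_inj (@swapK _))). Qed.

Lemma T_swap c t :
  T (fun x y => c (swap x) (swap y)) (fun x => t (swap x)) = T c t.
Proof.
rewrite /T [RHS](reindex_inj (can_inj (@swapK _))); apply: eq_bigr => x _.
rewrite [RHS](reindex_inj (can_inj (@swapK _))) /=.
apply: eq_big => [y|y _] //.
by rewrite (inj_eq (can_inj (@swapK _))).
Qed.

Lemma T_avg c t :
  (forall x y, c (swap x) (swap y) = c x y) ->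
  (forall x y, 0 <= c x y) -> (forall x, 0 <= t x) ->
  T c (fun x => (t x + t (swap x)) / 2) <= T c t.
Proof.
move=> cs c0 t0.
have e : T c t = T c (fun x => t (swap x)).
  rewrite -T_swap; congr T; apply: funext => x; apply: funext => y.
  by rewrite cs.
suff : 2 * T c (fun x => (t x + t (swap x)) / 2) <= T c t + T c (fun x => t (swap x)).
  rewrite -e; lra.
rewrite /T -big_split mulr_sumr; apply: ler_sum => x _.
rewrite -big_split mulr_sumr; apply: ler_sum => y _ /=.
rewrite -mulrDr mulrCA; apply: ler_wpM2l; first exact: c0.
exact: cs_ineq.
Qed.

Lemma T_lin c1 c2 t :
  T (fun x y => (c1 x y + c2 x y) / 2) t = (T c1 t + T c2 t) / 2.
Proof.
rewrite /T -big_split mulr_suml; apply: eq_bigr => x _.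
rewrite -big_split mulr_suml; apply: eq_bigr => y _ /=; ring.
Qed.

End Gen.
Section Model.
Variables (R : realType) (S : finType).
Variables (G1 G2 : S -> S -> R) (mu1 mu2 : S -> R).
Hypotheses (hG1 : forall x y, x != y -> 0 <= G1 x y)
           (hG2 : forall x y, x != y -> 0 <= G2 x y)
           (p1 : forall x, 0 < mu1 x) (p2 : forall x, 0 < mu2 x).

Local Notation m := (mu mu1 mu2).
Definition c0 x y := Ginf G1 G2 mu1 mu2 x y * mubar mu1 mu2 x.
Definition d0 x y := Gunc G1 G2 x y * m x.

Lemma m_pos x : 0 < m x.
Proof. by rewrite /mu mulr_gt0. Qed.

Lemma ms_pos x : 0 < m x + m (swap x).
Proof. by rewrite addr_gt0 ?m_pos. Qed.

Lemma c_d x y : c0 x y = (d0 x y + d0 (swap x) (swap y)) / 2.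
Proof.
case: x y => [x1 x2] [y1 y2].
have h := ms_pos (x1, x2).
rewrite /c0 /d0 /Ginf /Gunc /rho /mubar /= in h *.
case: (eqVneq x1 y1) => [<-|h1]; case: (eqVneq x2 y2) => [<-|h2];
  rewrite ?eqxx ?(negbTE h1) ?(negbTE h2) /=.
- ring.
- rewrite /mu /= in h *. field. by rewrite gt_eqF // addrC.
- rewrite /mu /= in h *. field. by rewrite gt_eqF // addrC.
- ring.
Qed.

Lemma d_ge0 x y : 0 <= d0 x y.
Proof.
case: x y => [x1 x2] [y1 y2]; rewrite /d0 /Gunc /=.
have hm := m_pos (x1, x2).
case: ifP => [/andP [_ h]|_]; first by rewrite mulr_ge0 ?hG1 ?ltW.
case: ifP => [/andP [_ h]|_]; first by rewrite mulr_ge0 ?hG2 ?ltW.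
by rewrite mul0r.
Qed.

Lemma c_ge0 x y : 0 <= c0 x y.
Proof. by rewrite c_d divr_ge0 ?addr_ge0 ?d_ge0. Qed.

Lemma c_swap x y : c0 (swap x) (swap y) = c0 x y.
Proof. by rewrite !c_d !swapK addrC. Qed.

Lemma J_T nu : Jfun G1 G2 mu1 mu2 nu = T c0 (fun x => nu x / mubar mu1 mu2 x).
Proof.
rewrite /Jfun /T /= -sumrB; apply: eq_bigr => x _.
rewrite /qinf !mulr_suml -sumrB; apply: eq_bigr => y _.
rewrite /c0; ring.
Qed.

Lemma qunc_sum x : qunc G1 G2 x = \sum_(y | y != x) Gunc G1 G2 x y.
Proof.
have -> : \sum_(y | y != x) Gunc G1 G2 x y = \sum_y Gunc G1 G2 x y.
  rewrite [RHS](bigD1 x) //=.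
  by rewrite {2}/Gunc !eqxx /= add0r.
case: x => [x1 x2].
have -> : \sum_y Gunc G1 G2 (x1, x2) y = \sum_a \sum_b Gunc G1 G2 (x1, x2) (a, b).
  by rewrite pair_bigA; apply: eq_bigr => -[].
rewrite (bigD1 x1) //= /qunc /qrate /= addrC; congr (_ + _).
  apply: eq_bigr => a ha.
  rewrite (bigD1 x2) //= big1 ?addr0.
    by rewrite /Gunc /= eqxx eq_sym ha.
  move=> b hb; rewrite /Gunc /= eq_sym (negbTE hb) /=.
  by rewrite eq_sym (negbTE ha).
rewrite big_mkcond; apply: eq_bigr => b _.
by rewrite /Gunc /= eqxx andbF /= eq_sym.
Qed.

Lemma Iinf_T gamma : (forall x, gamma x / m x = gamma (swap x) / m (swap x)) ->
  Iinf G1 G2 mu1 mu2 gamma = (T d0 (fun x => gamma x / m x))%:E.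
Proof.
move=> hs; rewrite /Iinf /= ifT; last by apply/forallP => x; rewrite hs.
congr EFin; rewrite /T -sumrB; apply: eq_bigr => x _.
rewrite qunc_sum mulr_suml -sumrB; apply: eq_bigr => y _.
have hm := m_pos x.
rewrite /d0 mulrBr; congr (_ - _); last by ring.
by field; rewrite gt_eqF.
Qed.

Lemma T_d_c f : (forall x, f (swap x) = f x) -> T c0 f = T d0 f.
Proof.
move=> hs.
have -> : c0 = fun x y => (d0 x y + (fun x y => d0 (swap x) (swap y)) x y) / 2.
  by apply: funext => x; apply: funext => y; rewrite c_d.
rewrite T_lin.
have -> : T (fun x y => d0 (swap x) (swap y)) f = T d0 f.
  rewrite -[in RHS](T_swap d0 f); congr T; apply: funext => x; by rewrite hs.
lra.
Qed.

Lemma main_sec gamma : is_prob gamma ->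
  I1 G1 G2 mu1 mu2 gamma = Iinf G1 G2 mu1 mu2 gamma.
Proof.
move=> [g0 g1].
have hm := m_pos; have hms := ms_pos.
have mbE x : mubar mu1 mu2 x = (m x + m (swap x)) / 2 by [].
have hmb x : 0 < mubar mu1 mu2 x by rewrite mbE divr_gt0.
have fnu nu : (forall x, Mmap mu1 mu2 nu x = gamma x) -> forall x,
    gamma x / m x = (nu x + nu (swap x)) / (m x + m (swap x)).
  move=> hM x; rewrite -hM /Mmap /rho; field.
  by rewrite !gt_eqF.
case: (boolP [forall x : S * S, gamma x / m x == gamma (swap x) / m (swap x)]) => hb.
- have hs x : gamma (swap x) / m (swap x) = gamma x / m x.
    by rewrite (eqP (forallP hb x)).
  rewrite Iinf_T; last by move=> x; rewrite hs.
  rewrite -T_d_c; last by move=> x; rewrite hs.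
  set f := fun x => gamma x / m x.
  have hs' x : f (swap x) = f x by rewrite /f hs.
  pose nu0 := fun x => f x * mubar mu1 mu2 x.
  have hnu0 : is_prob nu0 /\ forall x, Mmap mu1 mu2 nu0 x = gamma x.
    split; [split|].
    * move=> x; apply: mulr_ge0; [apply: divr_ge0; [exact: g0 | exact: ltW] | exact: ltW].
    * have e x : nu0 x = (gamma x + gamma (swap x)) / 2.
        have -> : nu0 x = (f x * m x + f (swap x) * m (swap x)) / 2.
          by rewrite /nu0 mbE hs'; ring.
        by rewrite /f !divfK ?gt_eqF.
      under eq_bigr do rewrite e.
      rewrite -mulr_suml big_split /= sum_swap g1; lra.
    * move=> x; rewrite /Mmap /nu0 /rho !mbE swapK hs' /f.
      by field; rewrite (gt_eqF (hm x)) (gt_eqF (hms x)).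
  apply: le_anti; apply/andP; split.
  + rewrite /I1; apply: ereal_inf_lbound; exists nu0 => //.
    rewrite J_T; congr EFin; congr T; apply: funext => x.
    by rewrite /nu0 mulfK // gt_eqF.
  + rewrite /I1; apply/ereal_infP => _ [nu [[n0 n1] hM] <-].
    rewrite lee_fin J_T.
    have <- : (fun x => (nu x / mubar mu1 mu2 x + nu (swap x) / mubar mu1 mu2 (swap x)) / 2) = f.
      apply: funext => x; rewrite /f (fnu nu hM x) !mbE swapK; field.
      by rewrite (gt_eqF (hms x)).
    apply: T_avg => //; [exact: c_swap | exact: c_ge0 | ].
    by move=> x; rewrite divr_ge0 // ltW.
- rewrite /Iinf /= (negbTE hb).
  apply/ereal_inf_pinfty => _ [nu [_ hM] <-]; exfalso; move/negP: hb; apply.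
  apply/forallP => x; rewrite !(fnu nu hM) swapK.
  apply/eqP; rewrite addrC; congr (_ / _); by rewrite addrC.
Qed.

End Model.

Lemma mu_pos (R : realType) (S : finType) (G : S -> S -> R) (m : S -> R) :
  irreducible G -> is_invariant G m -> reversible G m -> forall x, 0 < m x.
Proof.
move=> hirr [[m0 m1] _] hrev.
have [x0 hx0] : exists x0, 0 < m x0.
  case: (boolP [exists x0, 0 < m x0]) => [/existsP //|/existsPn h].
  have : \sum_x m x = 0.
    apply: big1 => x _; apply/eqP; rewrite eq_le m0 andbT.
    by have := h x; rewrite -leNgt.
  by rewrite m1 => /eqP; rewrite oner_eq0.
move=> y.
have /connectP [p hp ->] := hirr x0 y.
elim: p x0 hx0 hp => [|z p IH] x hx //= /andP [/andP [hxz hG] hp].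
apply: IH hp.
rewrite lt0r m0 andbT; apply/eqP => hz0.
have := hrev x z; rewrite hz0 mul0r => /eqP.
by rewrite mulf_eq0 (gt_eqF hx) (gt_eqF hG).
Qed.

Theorem corollary3p3 (R : realType) (S : finType)
  (G1 G2 : S -> S -> R) (mu1 mu2 : S -> R)
  (hG1 : is_intensity G1) (hG2 : is_intensity G2)
  (hirr1 : irreducible G1) (hirr2 : irreducible G2)
  (hinv1 : is_invariant G1 mu1) (hinv2 : is_invariant G2 mu2)
  (hrev1 : reversible G1 mu1) (hrev2 : reversible G2 mu2)
  (gamma : S * S -> R) (hgamma : is_prob gamma) :
  I1 G1 G2 mu1 mu2 gamma = Iinf G1 G2 mu1 mu2 gamma.
Proof.
apply: main_sec => //.
- exact: hG1.1.
- exact: hG2.1.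
- exact: mu_pos hirr1 hinv1 hrev1.
- exact: mu_pos hirr2 hinv2 hrev2.
Qed.
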